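(* The Nield-Kuznetsov function $N_{W}(a,x)$ and the complementary version $\hat N_W(a,x)$ are related by \[ N_{W}(a,x)=c_{0}^{+}(a)W(a,x)+c_{0}^{-}(a)W(a,-x)-\hat{N}_{W}(a,x), \] where \[ c_{0}^{\pm}(a)=\mp \hat{N}_{W}'(a,0)W(a,0) - \hat{N}_{W}(a,0)W'(a,0). \]
   Context: $a$ is real; $W(a,\pm x)$ are the Weber parabolic cylinder functions (DLMF Sect. 12.14), numerically satisfactory solutions of $y''+(\tfrac14 x^2-a)y=0$, with $W(a,0)W'(a,0)=-\tfrac12$. The Nield-Kuznetsov function of the first kind is $N_{W}(a,x)=W(a,x) \int_{0}^x W(a,-t)dt-W(a,-x)\int_{0}^x W(a,t)dt$, a solution of $y''+(\tfrac14 x^2-a)y=-1$ with $N_W(a,0)=N_W'(a,0)=0$. The complementary Nield-Kuznetsov function is $\hat{N}_{W}(a,x)=W(a,x)\int_{x}^{\infty} W(a,-t)dt-W(a,-x) \int_{x}^{\infty} W(a,t)dt$, whose negative also solves $y''+(\tfrac14 x^2-a)y=-1$. The solution of this inhomogeneous equation with $y(a,0)=\alpha$, $y'(a,0)=\beta$ is $y=C^{+}W(a,x)+C^{-}W(a,-x)+N_W(a,x)$ with $C^{\pm}=\mp\beta W(a,0)-\alpha W'(a,0)$. *)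

(* Defs.v *)
From Stdlib Require Import Reals Factorial.
From Coquelicot Require Import Coquelicot.
Open Scope R_scope.

(* |Gamma(s + i y)| for s > 0, via Euler's integral
   Gamma(z) = int_0^oo t^(z-1) e^(-t) dt, t^(i y) = cos(y ln t) + i sin(y ln t). *)
Definition Gamma_re (s y : R) : R :=
  RInt_gen (fun t => Rpower t (s - 1) * exp (- t) * cos (y * ln t))
           (at_right 0) (Rbar_locally p_infty).
Definition Gamma_im (s y : R) : R :=
  RInt_gen (fun t => Rpower t (s - 1) * exp (- t) * sin (y * ln t))
           (at_right 0) (Rbar_locally p_infty).
Definition Gamma_abs (s y : R) : R :=
  sqrt (Gamma_re s y ^ 2 + Gamma_im s y ^ 2).

(* DLMF 12.14.8 coefficients: pair n = (alpha_n, alpha_{n+1}),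
   alpha_0 = 1, alpha_1 = a, alpha_{n+2} = a alpha_{n+1} - (n+1)(2n+1)/2 alpha_n *)
Fixpoint alpha_pair (a : R) (n : nat) : R * R :=
  match n with
  | O => (1, a)
  | S m => let (p, q) := alpha_pair a m in
           (q, a * q - / 2 * INR (m + 1) * INR (2 * m + 1) * p)
  end.
Definition alpha (a : R) (n : nat) : R := fst (alpha_pair a n).

Fixpoint beta_pair (a : R) (n : nat) : R * R :=
  match n with
  | O => (1, a)
  | S m => let (p, q) := beta_pair a m in
           (q, a * q - / 2 * INR (m + 1) * INR (2 * m + 3) * p)
  end.
Definition beta (a : R) (n : nat) : R := fst (beta_pair a n).

(* DLMF 12.14.7: even and odd solutions *)
Definition y1 (a x : R) : R :=
  Series (fun n => alpha a n * x ^ (2 * n) / INR (Factorial.fact (2 * n))).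
Definition y2 (a x : R) : R :=
  Series (fun n => beta a n * x ^ (2 * n + 1) / INR (Factorial.fact (2 * n + 1))).

(* DLMF 12.14.9: G1 = |Gamma(1/4 + i a/2)|, G3 = |Gamma(3/4 + i a/2)|,
   W(a, x) = 2^(-3/4) (sqrt(G1/G3) y1(a,x) - sqrt(2 G3/G1) y2(a,x)).
   (W(a,-x) is then obtained by evaluating at -x, since y1 is even, y2 odd.) *)
Definition G1 (a : R) : R := Gamma_abs (/4) (a / 2).
Definition G3 (a : R) : R := Gamma_abs (3/4) (a / 2).

Definition W (a x : R) : R :=
  Rpower 2 (- (3/4)) *
  (sqrt (G1 a / G3 a) * y1 a x - sqrt (2 * G3 a / G1 a) * y2 a x).

Definition NW (a x : R) : R :=
  W a x * RInt (fun t => W a (- t)) 0 x - W a (- x) * RInt (fun t => W a t) 0 x.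

Definition NWhat (a x : R) : R :=
  W a x * RInt_gen (fun t => W a (- t)) (at_point x) (Rbar_locally p_infty)
  - W a (- x) * RInt_gen (fun t => W a t) (at_point x) (Rbar_locally p_infty).

Definition c0p (a : R) : R :=
  - Derive (NWhat a) 0 * W a 0 - NWhat a 0 * Derive (W a) 0.
Definition c0m (a : R) : R :=
  Derive (NWhat a) 0 * W a 0 - NWhat a 0 * Derive (W a) 0.

(* Main.v *)
Require Import Defs.
From Stdlib Require Import Reals Lra Lia Psatz Factorial Classical.
From Coquelicot Require Import Coquelicot.
Open Scope R_scope.

Lemma is_derive_eq (f : R -> R) x l l' : is_derive f x l' -> l' = l -> is_derive f x l.
Proof. intros H ->; exact H. Qed.

Lemma d_mul (f g : R -> R) x df dg : is_derive f x df -> is_derive g x dg ->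
  is_derive (fun t => f t * g t) x (df * g x + f x * dg).
Proof. intros Hf Hg. apply (is_derive_mult f g x df dg Hf Hg). intros; apply Rmult_comm. Qed.

Lemma d_plus (f g : R -> R) x df dg : is_derive f x df -> is_derive g x dg ->
  is_derive (fun t => f t + g t) x (df + dg).
Proof. intros Hf Hg. apply (is_derive_plus f g x df dg Hf Hg). Qed.

Lemma d_minus (f g : R -> R) x df dg : is_derive f x df -> is_derive g x dg ->
  is_derive (fun t => f t - g t) x (df - dg).
Proof. intros Hf Hg. apply (is_derive_minus f g x df dg Hf Hg). Qed.

Lemma d_comp (f g : R -> R) x df dg : is_derive f (g x) df -> is_derive g x dg ->
  is_derive (fun t => f (g t)) x (dg * df).
Proof. intros Hf Hg. apply (is_derive_comp f g x df dg Hf Hg). Qed.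

Lemma INR_fact_S n : INR (fact (S n)) = INR (S n) * INR (fact n).
Proof. rewrite <- mult_INR. reflexivity. Qed.

Lemma alpha_SS a m : alpha a (S (S m)) =
  a * alpha a (S m) - / 2 * INR (m + 1) * INR (2 * m + 1) * alpha a m.
Proof. unfold alpha. simpl. destruct (alpha_pair a m) as [p q]. simpl. reflexivity. Qed.

Lemma beta_SS a m : beta a (S (S m)) =
  a * beta a (S m) - / 2 * INR (m + 1) * INR (2 * m + 3) * beta a m.
Proof. unfold beta. simpl. destruct (beta_pair a m) as [p q]. simpl. reflexivity. Qed.

Lemma step_bound (a K p q N X c : R) : 2 <= K -> Rabs a <= K - 2 -> 0 <= N -> 0 <= X ->
  Rabs p <= X -> Rabs q <= K * (N + 1) * X -> 0 <= c <= 2 * (N + 1) * (N + 1) ->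
  Rabs (a * q - c * p) <= K * K * (N + 2) * (N + 1) * X.
Proof.
  intros HK Ha HN HX Hp Hq Hc.
  eapply Rle_trans. { unfold Rminus. apply Rabs_triang. }
  rewrite Rabs_Ropp, !Rabs_mult, (Rabs_pos_eq c) by lra.
  assert (H1 : Rabs a * Rabs q <= (K - 2) * (K * (N + 1) * X)).
  { apply Rmult_le_compat; try apply Rabs_pos; lra. }
  assert (H2 : c * Rabs p <= c * X) by (apply Rmult_le_compat_l; lra).
  assert (H3 : c * X <= 2 * (N + 1) * (N + 1) * X) by (apply Rmult_le_compat_r; lra).
  assert (H4 : 0 <= (N+1) * X) by nra.
  assert (H7 : 4 <= K*K) by nra.
  assert (H8 : 0 <= (K*K-4)*(N+1)) by (apply Rmult_le_pos; lra).
  assert (H5 : 0 <= K*K*(N+1) + 2*K - 2*(N+1)) by lra.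
  assert (H6 : 0 <= (N+1) * X * (K*K*(N+1) + 2*K - 2*(N+1))) by (apply Rmult_le_pos; lra).
  lra.
Qed.

Lemma alpha_bnd a n : Rabs (fst (alpha_pair a n)) <= (Rabs a + 2)^n * INR (fact n) /\
  Rabs (snd (alpha_pair a n)) <= (Rabs a + 2)^(S n) * INR (fact (S n)).
Proof.
  set (K := Rabs a + 2).
  assert (HK : 2 <= K) by (unfold K; pose proof (Rabs_pos a); lra).
  assert (Ha : Rabs a <= K - 2) by (unfold K; lra).
  induction n as [|n IH].
  - simpl. rewrite Rabs_R1. unfold K. split; [lra|]. pose proof (Rabs_pos a); lra.
  - change (alpha_pair a (S n)) with (let (p, q) := alpha_pair a n in
           (q, a * q - / 2 * INR (n + 1) * INR (2 * n + 1) * p)).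
    destruct (alpha_pair a n) as [p q]. cbv beta iota. cbn [fst snd] in IH |- *.
    destruct IH as [Hp Hq]. split; [exact Hq|].
    rewrite !INR_fact_S in *.
    pose proof (pos_INR n) as Hn.
    assert (HX : 0 <= K ^ n * INR (fact n)) by (apply Rmult_le_pos; [apply pow_le; lra | apply pos_INR]).
    eapply Rle_trans.
    + apply (step_bound a K p q (INR n) (K ^ n * INR (fact n))); try assumption.
      * eapply Rle_trans; [exact Hq|]. right. rewrite S_INR. simpl. ring.
      * rewrite !plus_INR, !mult_INR. simpl. nra.
    + right. rewrite !S_INR. simpl. ring.
Qed.

Lemma beta_bnd a n : Rabs (fst (beta_pair a n)) <= (Rabs a + 2)^n * INR (fact n) /\
  Rabs (snd (beta_pair a n)) <= (Rabs a + 2)^(S n) * INR (fact (S n)).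
Proof.
  set (K := Rabs a + 2).
  assert (HK : 2 <= K) by (unfold K; pose proof (Rabs_pos a); lra).
  assert (Ha : Rabs a <= K - 2) by (unfold K; lra).
  induction n as [|n IH].
  - simpl. rewrite Rabs_R1. unfold K. split; [lra|]. pose proof (Rabs_pos a); lra.
  - change (beta_pair a (S n)) with (let (p, q) := beta_pair a n in
           (q, a * q - / 2 * INR (n + 1) * INR (2 * n + 3) * p)).
    destruct (beta_pair a n) as [p q]. cbv beta iota. cbn [fst snd] in IH |- *.
    destruct IH as [Hp Hq]. split; [exact Hq|].
    rewrite !INR_fact_S in *.
    pose proof (pos_INR n) as Hn.
    assert (HX : 0 <= K ^ n * INR (fact n)) by (apply Rmult_le_pos; [apply pow_le; lra | apply pos_INR]).
    eapply Rle_trans.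
    + apply (step_bound a K p q (INR n) (K ^ n * INR (fact n))); try assumption.
      * eapply Rle_trans; [exact Hq|]. right. rewrite S_INR. simpl. ring.
      * rewrite !plus_INR, !mult_INR. simpl. nra.
    + right. rewrite !S_INR. simpl. ring.
Qed.

Lemma fact_sq_nat n : (fact n * fact n <= fact (2 * n))%nat.
Proof.
  induction n as [|n IH]; [simpl; lia|].
  replace (2 * S n)%nat with (S (S (2 * n))) by lia.
  change (fact (S (S (2 * n)))) with (S (S (2 * n)) * (S (2 * n) * fact (2 * n)))%nat.
  change (fact (S n)) with (S n * fact n)%nat.
  assert (H : (S n * S n <= S (S (2 * n)) * S (2 * n))%nat) by nia.
  pose proof (Nat.mul_le_mono _ _ _ _ H IH). nia.
Qed.

Lemma fact_sq n : INR (fact n) * INR (fact n) <= INR (fact (2 * n)).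
Proof. rewrite <- mult_INR. apply le_INR, fact_sq_nat. Qed.

Lemma fact_sq' n : INR (fact n) * INR (fact n) <= INR (fact (2 * n + 1)).
Proof.
  eapply Rle_trans; [apply fact_sq|]. rewrite Nat.add_1_r, INR_fact_S.
  pose proof (INR_fact_lt_0 (2*n)). rewrite S_INR. pose proof (pos_INR (2*n)). nra.
Qed.

Lemma div_bound (x F F2 B : R) : 0 < F -> F * F <= F2 -> 0 <= x -> x <= B * F -> x / F2 <= B / F.
Proof.
  intros HF HF2 Hx HxB.
  assert (0 < F2) by nra.
  apply (Rmult_le_reg_r (F2 * F)); [nra|].
  replace (x / F2 * (F2 * F)) with (x * F) by (field; lra).
  replace (B / F * (F2 * F)) with (B * F2) by (field; lra).
  assert (0 <= B) by (destruct (Rle_or_lt 0 B); [auto| nra]).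
  nra.
Qed.

Lemma pow_fact_bound c N : 0 <= c -> c <= INR N ->
  forall n, c ^ n / INR (fact n) <= (1 + c) ^ N.
Proof.
  intros Hc HN n. induction n as [|n IH].
  - simpl. replace (1 / 1) with 1 by field. apply pow_R1_Rle. lra.
  - destruct (Compare_dec.le_lt_dec (S n) N) as [Hle|Hlt].
    + apply Rle_trans with (c ^ S n).
      * pose proof (INR_fact_lt_0 (S n)).
        assert (1 <= INR (fact (S n))) by (apply (le_INR 1); pose proof (lt_O_fact (S n)); lia).
        unfold Rdiv. rewrite <- (Rmult_1_r (c ^ S n)) at 2. apply Rmult_le_compat_l.
        { apply pow_le; lra. }
        rewrite <- Rinv_1. apply Rinv_le_contravar; lra.
      * apply Rle_trans with ((1 + c) ^ S n).
        { apply pow_incr; lra. }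
        apply Rle_pow; [lra| lia].
    + rewrite INR_fact_S. simpl pow.
      assert (HNn : c <= INR (S n)) by (eapply Rle_trans; [exact HN| apply le_INR; lia]).
      pose proof (INR_fact_lt_0 n).
      assert (0 < INR (S n)) by (apply lt_0_INR; lia).
      replace (c * c ^ n / (INR (S n) * INR (fact n))) with ((c / INR (S n)) * (c ^ n / INR (fact n))) by (field; lra).
      apply Rle_trans with (1 * (c ^ n / INR (fact n))); [|lra].
      apply Rmult_le_compat_r.
      { apply Rmult_le_pos; [apply pow_le; lra| left; apply Rinv_0_lt_compat; lra]. }
      apply Rmult_le_reg_r with (INR (S n)); [lra|]. field_simplify; lra.
Qed.

Lemma inf_of_bound (c : nat -> R) :
  (forall r, exists M, forall n, Rabs (c n * r ^ n) <= M) -> CV_radius c = p_infty.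
Proof.
  intros H. destruct (CV_radius_bounded c) as [Hub _].
  destruct (CV_radius c) as [l| |] eqn:E; auto.
  - exfalso. specialize (Hub (l + 1) (H (l + 1))). simpl in Hub. lra.
  - exfalso. specialize (Hub 0 (H 0)). simpl in Hub. exact Hub.
Qed.

Definition Aa (a : R) (n : nat) : R := alpha a n / INR (fact (2 * n)).
Definition Bb (a : R) (n : nat) : R := beta a n / INR (fact (2 * n + 1)).

Lemma term_bound (al : R) (F2 : R) K r n : 0 <= K ->
  Rabs al <= K ^ n * INR (fact n) -> INR (fact n) * INR (fact n) <= F2 ->
  Rabs (al / F2 * r ^ n) <= (K * Rabs r) ^ n / INR (fact n).
Proof.
  intros HK Hal HF.
  pose proof (INR_fact_lt_0 n).
  assert (0 < F2) by nra.
  rewrite Rabs_mult, Rabs_div by lra. rewrite (Rabs_pos_eq F2) by lra.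
  rewrite <- RPow_abs, Rpow_mult_distr.
  replace (Rabs al / F2 * Rabs r ^ n) with ((Rabs al * Rabs r ^ n) / F2) by (field; lra).
  apply div_bound; auto.
  - apply Rmult_le_pos; [apply Rabs_pos| apply pow_le, Rabs_pos].
  - replace (K ^ n * Rabs r ^ n * INR (fact n)) with ((K ^ n * INR (fact n)) * Rabs r ^ n) by ring.
    apply Rmult_le_compat_r; [apply pow_le, Rabs_pos| exact Hal].
Qed.

Lemma Aa_inf a : CV_radius (Aa a) = p_infty.
Proof.
  apply inf_of_bound. intros r.
  set (K := Rabs a + 2). set (c := K * Rabs r).
  assert (Hc : 0 <= c) by (unfold c, K; apply Rmult_le_pos; [pose proof (Rabs_pos a); lra| apply Rabs_pos]).
  destruct (INR_unbounded c) as [N HN].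
  exists ((1 + c) ^ N). intros n.
  eapply Rle_trans; [apply term_bound| apply pow_fact_bound; lra].
  - unfold K; pose proof (Rabs_pos a); lra.
  - apply (alpha_bnd a n).
  - apply fact_sq.
Qed.

Lemma Bb_inf a : CV_radius (Bb a) = p_infty.
Proof.
  apply inf_of_bound. intros r.
  set (K := Rabs a + 2). set (c := K * Rabs r).
  assert (Hc : 0 <= c) by (unfold c, K; apply Rmult_le_pos; [pose proof (Rabs_pos a); lra| apply Rabs_pos]).
  destruct (INR_unbounded c) as [N HN].
  exists ((1 + c) ^ N). intros n.
  eapply Rle_trans; [apply term_bound| apply pow_fact_bound; lra].
  - unfold K; pose proof (Rabs_pos a); lra.
  - apply (beta_bnd a n).
  - apply fact_sq'.
Qed.

Lemma isp (u v : nat -> R) lu lv : is_series u lu -> is_series v lv ->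
  is_series (fun n => u n + v n) (lu + lv).
Proof. apply (is_series_plus u v). Qed.
Lemma ism (u v : nat -> R) lu lv : is_series u lu -> is_series v lv ->
  is_series (fun n => u n - v n) (lu - lv).
Proof. apply (is_series_minus u v). Qed.
Lemma iss (c : R) (u : nat -> R) l : is_series u l -> is_series (fun n => c * u n) (c * l).
Proof. apply (is_series_scal_l c u). Qed.

Lemma inf_is c x : CV_radius c = p_infty -> is_series (fun n => c n * x ^ n) (PSeries c x).
Proof.
  intros H. apply Series_correct.
  assert (Hl : Rbar_lt (Rabs x) (CV_radius c)) by (rewrite H; exact I).
  pose proof (CV_radius_inside c x Hl) as He.
  eapply ex_series_ext; [|exact He]. intros n. simpl. rewrite pow_n_pow. unfold scal; simpl.
  unfold mult; simpl. apply Rmult_comm.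
Qed.

Lemma ode_series (c : nat -> R) (k1 a : R) : CV_radius c = p_infty ->
  (forall n, k1 * PS_derive c n + 4 * PS_incr_1 (PS_derive (PS_derive c)) n
     + / 4 * PS_incr_1 c n - a * c n = 0) ->
  forall u, k1 * PSeries (PS_derive c) u + 4 * (u * PSeries (PS_derive (PS_derive c)) u)
    = - (u / 4 - a) * PSeries c u.
Proof.
  intros Hc Hco u.
  assert (H1 : CV_radius (PS_derive c) = p_infty) by (rewrite CV_radius_derive; exact Hc).
  assert (H2 : CV_radius (PS_derive (PS_derive c)) = p_infty) by (rewrite !CV_radius_derive; exact Hc).
  assert (H2' : CV_radius (PS_incr_1 (PS_derive (PS_derive c))) = p_infty) by (rewrite CV_radius_incr_1; exact H2).
  assert (H0' : CV_radius (PS_incr_1 c) = p_infty) by (rewrite CV_radius_incr_1; exact Hc).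
  rewrite <- !PSeries_incr_1.
  assert (E : k1 * PSeries (PS_derive c) u + 4 * PSeries (PS_incr_1 (PS_derive (PS_derive c))) u
     + / 4 * PSeries (PS_incr_1 c) u - a * PSeries c u = 0 * PSeries c u).
  {
    pose proof (ism _ _ _ _ (isp _ _ _ _ (isp _ _ _ _ (iss k1 _ _ (inf_is _ u H1))
                   (iss 4 _ _ (inf_is _ u H2'))) (iss (/4) _ _ (inf_is _ u H0')))
                   (iss a _ _ (inf_is _ u Hc))) as HS.
    pose proof (is_series_unique _ _ HS) as E1.
    pose proof (is_series_unique _ _ (iss 0 _ _ (inf_is _ u Hc))) as E2.
    rewrite <- E1. rewrite <- E2. apply Series_ext. intros n.
    transitivity ((k1 * PS_derive c n + 4 * PS_incr_1 (PS_derive (PS_derive c)) n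
     + / 4 * PS_incr_1 c n - a * c n) * u ^ n); [ring|]. rewrite Hco. ring. }
  replace (- (u / 4 - a) * PSeries c u) with (- (/ 4 * (u * PSeries c u)) + a * PSeries c u) by field.
  replace (u * PSeries c u) with (PSeries (PS_incr_1 c) u) by (rewrite PSeries_incr_1; reflexivity).
  lra.
Qed.

Lemma fact2 m : INR (fact (2 * S m)) = (2 * INR m + 2) * (2 * INR m + 1) * INR (fact (2 * m)).
Proof.
  replace (2 * S m)%nat with (S (S (2 * m))) by lia.
  rewrite !INR_fact_S, !S_INR, mult_INR. simpl (INR 2). ring.
Qed.

Lemma fact2' m : INR (fact (2 * S m + 1)) = (2 * INR m + 3) * (2 * INR m + 2) * INR (fact (2 * m + 1)).
Proof.
  replace (2 * S m + 1)%nat with (S (S (2 * m + 1))) by lia.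
  rewrite !INR_fact_S, !S_INR, plus_INR, mult_INR. simpl (INR 2). simpl (INR 1). ring.
Qed.

Lemma Aa_coef a n : 2 * PS_derive (Aa a) n + 4 * PS_incr_1 (PS_derive (PS_derive (Aa a))) n
     + / 4 * PS_incr_1 (Aa a) n - a * Aa a n = 0.
Proof.
  destruct n as [|m].
  - unfold PS_derive, PS_incr_1, Aa, alpha. simpl. unfold zero; simpl. field.
  - unfold PS_derive, PS_incr_1, Aa.
    rewrite alpha_SS. rewrite (fact2 (S m)), (fact2 m). rewrite !S_INR, !plus_INR, !mult_INR.
    simpl (INR 1). simpl (INR 2).
    pose proof (INR_fact_lt_0 (2 * m)). pose proof (pos_INR m).
    field. repeat split; lra.
Qed.

Lemma Bb_coef a n : 6 * PS_derive (Bb a) n + 4 * PS_incr_1 (PS_derive (PS_derive (Bb a))) n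
     + / 4 * PS_incr_1 (Bb a) n - a * Bb a n = 0.
Proof.
  destruct n as [|m].
  - unfold PS_derive, PS_incr_1, Bb, beta. simpl. unfold zero; simpl. field.
  - unfold PS_derive, PS_incr_1, Bb.
    rewrite beta_SS. rewrite (fact2' (S m)), (fact2' m). rewrite !S_INR, !plus_INR, !mult_INR.
    simpl (INR 1). simpl (INR 2).
    pose proof (INR_fact_lt_0 (2 * m + 1)). pose proof (pos_INR m).
    simpl (INR 3). field. repeat split; lra.
Qed.

Lemma y1_eq a x : y1 a x = PSeries (Aa a) (x ^ 2).
Proof.
  unfold y1, PSeries. apply Series_ext. intros n. unfold Aa. rewrite pow_mult.
  pose proof (INR_fact_neq_0 (2 * n)). field. auto.
Qed.

Lemma y2_eq a x : y2 a x = x * PSeries (Bb a) (x ^ 2).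
Proof.
  unfold y2, PSeries. rewrite <- Series_scal_l. apply Series_ext. intros n. unfold Bb.
  rewrite pow_add, pow_mult.
  pose proof (INR_fact_neq_0 (2 * n + 1)). field. auto.
Qed.

Lemma d_psq c x : CV_radius c = p_infty ->
  is_derive (fun t => PSeries c (t ^ 2)) x (2 * x * PSeries (PS_derive c) (x ^ 2)).
Proof.
  intros Hc.
  eapply is_derive_eq.
  - apply (d_comp (PSeries c) (fun t => t ^ 2)).
    + apply is_derive_PSeries. rewrite Hc. exact I.
    + assert (H : is_derive (fun t : R => t ^ 2) x (2 * x)) by (auto_derive; [trivial| ring]).
      exact H.
  - reflexivity.
Qed.

Lemma d_id x : is_derive (fun t : R => t) x 1.
Proof. auto_derive; [trivial| ring]. Qed.

Definition dy1 a x := 2 * x * PSeries (PS_derive (Aa a)) (x ^ 2).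
Definition dy2 a x := PSeries (Bb a) (x ^ 2) + x * (2 * x * PSeries (PS_derive (Bb a)) (x ^ 2)).

Lemma y1_d a x : is_derive (y1 a) x (dy1 a x).
Proof.
  eapply is_derive_ext; [intros t; symmetry; apply y1_eq|].
  apply d_psq, Aa_inf.
Qed.

Lemma y2_d a x : is_derive (y2 a) x (dy2 a x).
Proof.
  eapply is_derive_ext; [intros t; symmetry; apply y2_eq|].
  eapply is_derive_eq.
  - apply d_mul; [apply d_id| apply d_psq, Bb_inf].
  - unfold dy2. simpl. ring.
Qed.

Lemma dy1_d a x : is_derive (dy1 a) x (- (x ^ 2 / 4 - a) * y1 a x).
Proof.
  pose proof (Aa_inf a) as H0.
  assert (H1 : CV_radius (PS_derive (Aa a)) = p_infty) by (rewrite CV_radius_derive; exact H0).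
  unfold dy1.
  eapply is_derive_eq.
  - apply d_mul.
    + assert (H : is_derive (fun t : R => 2 * t) x 2) by (auto_derive; [trivial| ring]). exact H.
    + apply d_psq, H1.
  - rewrite y1_eq. rewrite <- (ode_series (Aa a) 2 a H0 (Aa_coef a) (x ^ 2)). match goal with |- ?A = ?B => change (@eq R A B) end. ring.
Qed.

Lemma dy2_d a x : is_derive (dy2 a) x (- (x ^ 2 / 4 - a) * y2 a x).
Proof.
  pose proof (Bb_inf a) as H0.
  assert (H1 : CV_radius (PS_derive (Bb a)) = p_infty) by (rewrite CV_radius_derive; exact H0).
  unfold dy2.
  eapply is_derive_eq.
  - apply d_plus; [apply d_psq, H0|].
    apply d_mul; [apply d_id|].
    apply d_mul.
    + assert (H : is_derive (fun t : R => 2 * t) x 2) by (auto_derive; [trivial| ring]). exact H.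
    + apply d_psq, H1.
  - rewrite y2_eq.
    replace (- (x ^ 2 / 4 - a) * (x * PSeries (Bb a) (x ^ 2)))
      with (x * (- (x ^ 2 / 4 - a) * PSeries (Bb a) (x ^ 2))) by ring.
    rewrite <- (ode_series (Bb a) 6 a H0 (Bb_coef a) (x ^ 2)).
    match goal with |- ?A = ?B => change (@eq R A B) end. ring.
Qed.

Lemma sq_le (u v : R) : 0 <= v -> u ^ 2 <= v ^ 2 -> Rabs u <= v.
Proof.
  intros Hv H. destruct (Rle_or_lt (Rabs u) v) as [|Hlt]; auto.
  exfalso. rewrite <- (pow2_abs u) in H. pose proof (Rabs_pos u). nra.
Qed.

Lemma gb1 (v Q b C : R) : 1 <= b -> b ^ 2 / 8 <= Q -> 0 <= C -> v ^ 2 <= C * Q ->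
  Rabs (v / Q) <= (8 * C + 1) / b.
Proof.
  intros Hb HQ HC Hv.
  assert (HQ0 : 0 < Q) by nra.
  set (w := v / Q).
  assert (Hvw : v = w * Q) by (unfold w; field; lra).
  rewrite Hvw in Hv.
  assert (H1 : w ^ 2 * Q <= C).
  { apply (Rmult_le_reg_r Q); [lra|]. nra. }
  assert (H2 : (w * b) ^ 2 <= 8 * C).
  { assert (Hw : 0 <= w ^ 2) by nra.
    assert (0 <= w ^ 2 * (8 * Q - b ^ 2)) by (apply Rmult_le_pos; lra).
    replace ((w * b) ^ 2) with (w ^ 2 * b ^ 2) by ring. lra. }
  assert (H3 : Rabs (w * b) <= 8 * C + 1) by (apply sq_le; nra).
  rewrite Rabs_mult, (Rabs_pos_eq b) in H3 by lra.
  apply (Rmult_le_reg_r b); [lra|]. unfold Rdiv. rewrite Rmult_assoc, Rinv_l by lra. lra.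
Qed.

Lemma gb2 (yv Q b M : R) : 1 <= b -> b ^ 2 / 8 <= Q -> Rabs yv <= M ->
  Rabs (yv * (b / 2) / Q ^ 2) <= 32 * M / b.
Proof.
  intros Hb HQ Hy.
  assert (HQ0 : 0 < Q) by nra.
  assert (HM : 0 <= M) by (pose proof (Rabs_pos yv); lra).
  rewrite Rabs_div by (apply pow_nonzero; lra).
  rewrite Rabs_mult, (Rabs_pos_eq (b / 2)) by lra.
  rewrite (Rabs_pos_eq (Q ^ 2)) by (apply pow_le; lra).
  apply (Rmult_le_reg_r (Q ^ 2 * b)); [apply Rmult_lt_0_compat; [apply pow_lt|]; lra|].
  replace (Rabs yv * (b / 2) / Q ^ 2 * (Q ^ 2 * b)) with (Rabs yv * b * b / 2) by (field; lra).
  replace (32 * M / b * (Q ^ 2 * b)) with (32 * M * Q ^ 2) by (field; lra).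
  assert (Hq2 : b ^ 4 / 64 <= Q ^ 2).
  { replace (b ^ 4 / 64) with ((b ^ 2 / 8) ^ 2) by field. apply pow_incr. split; [nra| exact HQ]. }
  assert (Hbb : 1 <= b * b) by nra.
  assert (Hb4 : b * b <= b ^ 4).
  { replace (b ^ 4) with ((b * b) * (b * b)) by ring. rewrite <- (Rmult_1_r (b * b)) at 1.
    apply Rmult_le_compat_l; lra. }
  assert (H1 : Rabs yv * (b * b) <= M * (b * b)) by (apply Rmult_le_compat_r; nra).
  assert (H2 : M * (b * b) <= M * b ^ 4) by (apply Rmult_le_compat_l; nra).
  assert (H3 : M * b ^ 4 <= 64 * M * Q ^ 2) by nra.
  nra.
Qed.

Lemma hb (yv Q t M : R) : 1 <= t -> t ^ 2 / 8 <= Q -> Rabs yv <= M ->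
  Rabs (yv * ((Q / 2 - t ^ 2 / 2) / Q ^ 3)) <= 288 * M / t ^ 2.
Proof.
  intros Ht HQ Hy.
  assert (HQ0 : 0 < Q) by nra.
  assert (HM : 0 <= M) by (pose proof (Rabs_pos yv); lra).
  rewrite Rabs_mult, Rabs_div by (apply pow_nonzero; lra).
  rewrite (Rabs_pos_eq (Q ^ 3)) by (apply pow_le; lra).
  assert (Hn : Rabs (Q / 2 - t ^ 2 / 2) <= 9 * Q / 2).
  { apply Rabs_le. split; nra. }
  apply (Rmult_le_reg_r (Q ^ 3 * t ^ 2)); [apply Rmult_lt_0_compat; apply pow_lt; lra|].
  replace (Rabs yv * (Rabs (Q / 2 - t ^ 2 / 2) / Q ^ 3) * (Q ^ 3 * t ^ 2))
    with (Rabs yv * Rabs (Q / 2 - t ^ 2 / 2) * t ^ 2) by (field; lra).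
  replace (288 * M / t ^ 2 * (Q ^ 3 * t ^ 2)) with (288 * M * Q ^ 3) by (field; nra).
  assert (H1 : Rabs yv * Rabs (Q / 2 - t ^ 2 / 2) <= M * (9 * Q / 2)).
  { apply Rmult_le_compat; try apply Rabs_pos; lra. }
  assert (H2 : Rabs yv * Rabs (Q / 2 - t ^ 2 / 2) * t ^ 2 <= M * (9 * Q / 2) * (8 * Q)).
  { apply Rmult_le_compat; try nra. apply Rmult_le_pos; apply Rabs_pos. }
  assert (H3 : 1 / 8 <= Q) by nra.
  assert (H4 : M * (9 * Q / 2) * (8 * Q) <= 288 * M * Q ^ 3).
  { replace (M * (9 * Q / 2) * (8 * Q)) with (36 * M * Q * Q) by field.
    replace (288 * M * Q ^ 3) with (36 * M * Q * Q * (8 * Q)) by ring.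
    rewrite <- (Rmult_1_r (36 * M * Q * Q)) at 1. apply Rmult_le_compat_l; [|lra].
    apply Rmult_le_pos; [|lra]. apply Rmult_le_pos; lra. }
  lra.
Qed.

Lemma mono_lim (F : R -> R) T B : (forall u v, T <= u -> u <= v -> F u <= F v) ->
  (forall u, T <= u -> F u <= B) -> exists L : R, is_lim F p_infty L.
Proof.
  intros Hm Hb.
  set (E := fun z => exists u, T <= u /\ z = F u).
  assert (HE : bound E) by (exists B; intros z [u [Hu ->]]; apply Hb, Hu).
  assert (HE' : exists z, E z) by (exists (F T); exists T; split; [lra| reflexivity]).
  destruct (completeness E HE HE') as [L [Hub Hlub]].
  exists L. apply is_lim_spec. intros eps. simpl.
  destruct (classic (exists u, T <= u /\ L - eps < F u)) as [[u [Hu Hlt]]|Hn].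
  - exists u. intros x Hx.
    assert (F u <= F x) by (apply Hm; lra).
    assert (F x <= L) by (apply Hub; exists x; split; [lra| reflexivity]).
    apply Rabs_def1; destruct eps; simpl in *; lra.
  - exfalso.
    assert (L <= L - eps).
    { apply Hlub. intros z [u [Hu ->]]. destruct (Rle_or_lt (F u) (L - eps)); auto.
      exfalso; apply Hn; exists u; split; auto. }
    destruct eps; simpl in *; lra.
Qed.

Lemma exd_cont (f : R -> R) x : ex_derive f x -> continuous f x.
Proof. intros H. exact (@ex_derive_continuous R_AbsRing R_NormedModule f x H). Qed.

Lemma exR_cont (f : R -> R) u v : (forall z, Rmin u v <= z <= Rmax u v -> continuous f z) -> ex_RInt f u v.
Proof. intros H. exact (@ex_RInt_continuous R_CompleteNormedModule f u v H). Qed.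

Lemma chasles (f : R -> R) u v w : ex_RInt f u v -> ex_RInt f v w ->
  RInt f u v + RInt f v w = RInt f u w.
Proof. intros H1 H2. exact (RInt_Chasles f u v w H1 H2). Qed.

Lemma RInt_scalR (f : R -> R) u v k : ex_RInt f u v -> RInt (fun t => k * f t) u v = k * RInt f u v.
Proof. intros H. exact (RInt_scal f u v k H). Qed.
Lemma RInt_plusR (f g : R -> R) u v : ex_RInt f u v -> ex_RInt g u v ->
  RInt (fun t => f t + g t) u v = RInt f u v + RInt g u v.
Proof. intros H1 H2. exact (RInt_plus f g u v H1 H2). Qed.
Lemma RInt_minusR (f g : R -> R) u v : ex_RInt f u v -> ex_RInt g u v ->
  RInt (fun t => f t - g t) u v = RInt f u v - RInt g u v.
Proof. intros H1 H2. exact (RInt_minus f g u v H1 H2). Qed.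
Lemma cont_scalR (f : R -> R) k x : continuous f x -> continuous (fun t => k * f t) x.
Proof. intros H. exact (continuous_scal_r k f x H). Qed.
Lemma cont_minusR (f g : R -> R) x : continuous f x -> continuous g x -> continuous (fun t => f t - g t) x.
Proof. intros H1 H2. exact (continuous_minus f g x H1 H2). Qed.
Lemma is_RInt_deriveR (f df : R -> R) u v :
  (forall x, Rmin u v <= x <= Rmax u v -> is_derive f x (df x)) ->
  (forall x, Rmin u v <= x <= Rmax u v -> continuous df x) -> is_RInt df u v (f v - f u).
Proof. intros H1 H2. exact (is_RInt_derive f df u v H1 H2). Qed.

Lemma cont_of_derive (f : R -> R) x l : is_derive f x l -> continuous f x.
Proof. intros H. exact (ex_derive_continuous f x (ex_intro _ l H)). Qed.

Lemma ex_RInt_cont (f : R -> R) u v : u <= v -> (forall t, u <= t <= v -> continuous f t) -> ex_RInt f u v.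
Proof.
  intros Huv H. apply exR_cont. intros z Hz.
  rewrite Rmin_left, Rmax_right in Hz by lra. apply H; lra.
Qed.

Lemma conv (y dy : R -> R) (a : R) :
  (forall t, is_derive y t (dy t)) ->
  (forall t, is_derive dy t (- (t ^ 2 / 4 - a) * y t)) ->
  exists L : R, is_lim (fun b => RInt y 0 b) p_infty L.
Proof.
  intros Hy Hdy.
  assert (Cy : forall t, continuous y t) by (intros t; eapply cont_of_derive; apply Hy).
  set (T := 8 * Rabs a + 1).
  assert (HT1 : 1 <= T) by (unfold T; pose proof (Rabs_pos a); lra).
  assert (Hq : forall t, T <= t -> t ^ 2 / 8 <= t ^ 2 / 4 - a).
  { intros t Ht. pose proof (Rabs_pos a). pose proof (Rle_abs a). unfold T in Ht. nra. }
  assert (Hqpos : forall t, T <= t -> 0 < t ^ 2 / 4 - a).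
  { intros t Ht. specialize (Hq t Ht). nra. }
  set (phi := fun t => dy t ^ 2 / (t ^ 2 / 4 - a) + y t ^ 2).
  assert (Hphi_d : forall t, T <= t ->
     is_derive phi t (- (dy t ^ 2 * (t / 2) / (t ^ 2 / 4 - a) ^ 2))).
  { intros t Ht. pose proof (Hqpos t Ht). unfold phi. auto_derive.
    - repeat split; try (eexists; apply Hy); try (eexists; apply Hdy); nra.
    - replace (Derive (fun x : R => dy x) t) with (- (t^2/4 - a) * y t)
        by (symmetry; apply is_derive_unique; apply Hdy).
      replace (Derive (fun x : R => y x) t) with (dy t)
        by (symmetry; apply is_derive_unique; apply Hy).
      field. nra. }
  assert (Hphi_le : forall t, T <= t -> phi t <= phi T).
  { intros t Ht.
    destruct (MVT_gen phi T t (fun t => - (dy t ^ 2 * (t / 2) / (t ^ 2 / 4 - a) ^ 2))) as [c [Hc Heq]].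
    - intros x Hx. rewrite Rmin_left in Hx by lra. apply Hphi_d. lra.
    - intros x Hx. rewrite Rmin_left, Rmax_right in Hx by lra.
      apply continuity_pt_filterlim. eapply cont_of_derive. apply Hphi_d. lra.
    - rewrite Rmin_left, Rmax_right in Hc by lra.
      assert (0 <= dy c ^ 2 * (c / 2) / (c ^ 2 / 4 - a) ^ 2).
      { pose proof (Hqpos c (proj1 Hc)). apply Rmult_le_pos.
        - apply Rmult_le_pos; [apply pow2_ge_0| lra].
        - left. apply Rinv_0_lt_compat. apply pow_lt. lra. }
      nra. }
  set (C := phi T).
  assert (HC0 : 0 <= C).
  { unfold C, phi. pose proof (Hqpos T (Rle_refl T)). apply Rplus_le_le_0_compat; [|apply pow2_ge_0].
    apply Rmult_le_pos; [apply pow2_ge_0| left; apply Rinv_0_lt_compat; lra]. }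
  set (M := C + 1).
  assert (HyM : forall t, T <= t -> Rabs (y t) <= M).
  { intros t Ht. pose proof (Hphi_le t Ht) as H. change (dy t ^ 2 / (t ^ 2 / 4 - a) + y t ^ 2 <= C) in H.
    pose proof (Hqpos t Ht).
    assert (0 <= dy t ^ 2 / (t ^ 2 / 4 - a)).
    { apply Rmult_le_pos; [apply pow2_ge_0| left; apply Rinv_0_lt_compat; lra]. }
    apply sq_le; unfold M; nra. }
  assert (HdyC : forall t, T <= t -> dy t ^ 2 <= C * (t ^ 2 / 4 - a)).
  { intros t Ht. pose proof (Hphi_le t Ht) as H. change (dy t ^ 2 / (t ^ 2 / 4 - a) + y t ^ 2 <= C) in H.
    pose proof (Hqpos t Ht).
    assert (dy t ^ 2 / (t ^ 2 / 4 - a) <= C) by (pose proof (pow2_ge_0 (y t)); lra).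
    apply (Rmult_le_reg_r (/ (t ^ 2 / 4 - a))); [apply Rinv_0_lt_compat; lra|].
    replace (C * (t ^ 2 / 4 - a) * / (t ^ 2 / 4 - a)) with C by (field; lra). exact H1. }
  set (h := fun t => ((t ^ 2 / 4 - a) / 2 - t ^ 2 / 2) / (t ^ 2 / 4 - a) ^ 3).
  set (g := fun t => dy t / (t ^ 2 / 4 - a) + y t * (t / 2) / (t ^ 2 / 4 - a) ^ 2).
  assert (Hg_d : forall t, T <= t -> is_derive g t (y t * h t - y t)).
  { intros t Ht. pose proof (Hqpos t Ht). unfold g, h. auto_derive.
    - repeat split; try (eexists; apply Hy); try (eexists; apply Hdy); nra.
    - replace (Derive (fun x : R => dy x) t) with (- (t^2/4 - a) * y t)
        by (symmetry; apply is_derive_unique; apply Hdy).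
      replace (Derive (fun x : R => y x) t) with (dy t)
        by (symmetry; apply is_derive_unique; apply Hy).
      field. nra. }
  set (D := 8 * C + 1 + 32 * M).
  assert (Hgb : forall b, T <= b -> Rabs (g b) <= D / b).
  { intros b Hb. unfold g.
    eapply Rle_trans; [apply Rabs_triang|].
    pose proof (gb1 (dy b) (b ^ 2 / 4 - a) b C ltac:(lra) (Hq b Hb) HC0 (HdyC b Hb)).
    pose proof (gb2 (y b) (b ^ 2 / 4 - a) b M ltac:(lra) (Hq b Hb) (HyM b Hb)).
    unfold D. replace ((8 * C + 1 + 32 * M) / b) with ((8 * C + 1) / b + 32 * M / b) by (field; lra).
    lra. }
  set (kk := fun t => 288 * M / t ^ 2).
  assert (Hyh : forall t, T <= t -> Rabs (y t * h t) <= kk t).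
  { intros t Ht. unfold h, kk. apply hb; [lra| apply Hq, Ht| apply HyM, Ht]. }
  assert (Hkk_int : forall b, T <= b -> RInt kk T b = 288 * M / T - 288 * M / b).
  { intros b Hb. apply is_RInt_unique.
    assert (H := is_RInt_derive (fun t => - (288 * M) / t) kk T b).
    replace (288 * M / T - 288 * M / b) with (minus (- (288 * M) / b) (- (288 * M) / T)).
    2:{ unfold minus, plus, opp; simpl. field. lra. }
    apply H.
    - intros x Hx. rewrite Rmin_left, Rmax_right in Hx by lra. unfold kk.
      auto_derive; [lra| field; lra].
    - intros x Hx. rewrite Rmin_left, Rmax_right in Hx by lra. unfold kk.
      apply exd_cont. auto_derive. repeat split; nra. }
  assert (Cyhk : forall t, T <= t -> continuous (fun t => y t * h t + kk t) t).
  { intros t Ht. pose proof (Hqpos t Ht). apply exd_cont. unfold h, kk. auto_derive.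
    repeat split; try (eexists; apply Hy). all: repeat apply Rmult_integral_contrapositive_currified; nra. }
  assert (Cyh : forall t, T <= t -> continuous (fun t => y t * h t) t).
  { intros t Ht. pose proof (Hqpos t Ht). apply exd_cont. unfold h. auto_derive.
    repeat split; try (eexists; apply Hy); repeat apply Rmult_integral_contrapositive_currified; nra. }
  assert (Ckk : forall t, T <= t -> continuous kk t).
  { intros t Ht. apply exd_cont. unfold kk. auto_derive. nra. }
  set (F := fun b => RInt (fun t => y t * h t + kk t) T b).
  assert (HFm : forall u v, T <= u -> u <= v -> F u <= F v).
  { intros u v Hu Huv. unfold F.
    rewrite <- (chasles (fun t => y t * h t + kk t) T u v).
    - assert (0 <= RInt (fun t => y t * h t + kk t) u v).
      { apply RInt_ge_0; [lra| |].
        - apply ex_RInt_cont; [lra|]. intros; apply Cyhk; lra.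
        - intros x Hx. pose proof (Hyh x ltac:(lra)). apply Rabs_le_between in H. lra. }
      lra.
    - apply ex_RInt_cont; [lra|]. intros; apply Cyhk; lra.
    - apply ex_RInt_cont; [lra|]. intros; apply Cyhk; lra. }
  assert (HFb : forall u, T <= u -> F u <= 2 * (288 * M / T)).
  { intros u Hu. unfold F.
    apply Rle_trans with (RInt (fun t => 2 * kk t) T u).
    - apply RInt_le; [lra| | |].
      + apply ex_RInt_cont; [lra|]. intros; apply Cyhk; lra.
      + apply ex_RInt_cont; [lra|]. intros t Ht. apply (cont_scalR kk 2 t). apply Ckk; lra.
      + intros x Hx. pose proof (Hyh x ltac:(lra)). apply Rabs_le_between in H. lra.
    - rewrite RInt_scalR.
      + rewrite Hkk_int by lra.
        assert (0 <= 288 * M / u).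
        { unfold M. apply Rmult_le_pos; [lra| left; apply Rinv_0_lt_compat; lra]. }
        lra.
      + apply ex_RInt_cont; [lra|]. intros; apply Ckk; lra. }
  destruct (mono_lim F T _ HFm HFb) as [L1 HL1].
  exists (RInt y 0 T + (L1 - 288 * M / T) + g T).
  apply is_lim_spec in HL1. unfold is_lim' in HL1.
  apply is_lim_spec. intros eps.
  assert (He3 : 0 < eps / 3) by (destruct eps; simpl; lra).
  destruct (HL1 (mkposreal _ He3)) as [B1 HB1].
  exists (Rmax B1 (Rmax T (3 * (D + 288 * M) / eps))). intros b Hb.
  assert (HbT : T < b) by (eapply Rle_lt_trans; [|exact Hb]; eapply Rle_trans; [|apply Rmax_r]; apply Rmax_l).
  assert (HbB : B1 < b) by (eapply Rle_lt_trans; [|exact Hb]; apply Rmax_l).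
  assert (HbE : 3 * (D + 288 * M) / eps < b)
    by (eapply Rle_lt_trans; [|exact Hb]; eapply Rle_trans; [|apply Rmax_r]; apply Rmax_r).
  assert (Hdec : RInt y 0 b = RInt y 0 T + (F b - (288 * M / T - 288 * M / b)) - (g b - g T)).
  { assert (E1 : RInt y 0 b = RInt y 0 T + RInt y T b).
    { symmetry. apply (chasles y 0 T b);
        apply exR_cont; intros; apply Cy. }
    assert (E2 : RInt (fun t => y t * h t - y t) T b = g b - g T).
    { apply is_RInt_unique. apply (is_RInt_deriveR g).
      - intros x Hx. rewrite Rmin_left in Hx by lra. apply Hg_d. lra.
      - intros x Hx. rewrite Rmin_left, Rmax_right in Hx by lra.
        apply (cont_minusR (fun t => y t * h t) y). apply Cyh; lra. apply Cy. }
    assert (E3 : RInt (fun t => y t * h t - y t) T b = RInt (fun t => y t * h t) T b - RInt y T b).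
    { apply (RInt_minusR (fun t => y t * h t) y).
      - apply ex_RInt_cont; [lra|]. intros; apply Cyh; lra.
      - apply exR_cont; intros; apply Cy. }
    assert (E4 : F b = RInt (fun t => y t * h t) T b + RInt kk T b).
    { unfold F. apply (RInt_plusR (fun t => y t * h t) kk).
      - apply ex_RInt_cont; [lra|]. intros; apply Cyh; lra.
      - apply ex_RInt_cont; [lra|]. intros; apply Ckk; lra. }
    rewrite Hkk_int in E4 by lra.
    lra. }
  rewrite Hdec.
  specialize (HB1 b HbB). simpl in HB1.
  pose proof (Hgb b (Rlt_le _ _ HbT)) as Hg.
  assert (HDb : (D + 288 * M) / b < eps / 3).
  { assert (0 < b) by lra. destruct eps as [e He]; simpl in *.
    apply (Rmult_lt_reg_r b); [lra|]. unfold Rdiv at 1. rewrite Rmult_assoc, Rinv_l, Rmult_1_r by lra.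
    apply (Rmult_lt_reg_r (3 / e)). { apply Rmult_lt_0_compat; [lra| apply Rinv_0_lt_compat; lra]. }
    replace (e / 3 * b * (3 / e)) with b by (field; lra).
    replace ((D + 288 * M) * (3 / e)) with (3 * (D + 288 * M) / e) by (field; lra). lra. }
  assert (0 <= 288 * M / b) by (unfold M; apply Rmult_le_pos; [lra| left; apply Rinv_0_lt_compat; lra]).
  assert (HD' : D / b + 288 * M / b = (D + 288 * M) / b) by (field; lra).
  apply Rabs_lt_between in HB1. apply Rabs_le_between in Hg.
  apply Rabs_def1; destruct eps; simpl in *; lra.
Qed.

Lemma RInt_correctR (f : R -> R) u v : ex_RInt f u v -> is_RInt f u v (RInt f u v).
Proof. intros H. exact (@RInt_correct R_CompleteNormedModule f u v H). Qed.

Lemma gen_int (f : R -> R) (L : R) : (forall t, continuous f t) ->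
  is_lim (fun b => RInt f 0 b) p_infty L ->
  forall x, is_RInt_gen f (at_point x) (Rbar_locally p_infty) (L - RInt f 0 x).
Proof.
  intros Cf HL x.
  assert (HL' : is_lim (fun b => RInt f 0 b - RInt f 0 x) p_infty (L - RInt f 0 x)).
  { eapply is_lim_minus; [exact HL| apply is_lim_const| reflexivity]. }
  intros P HP.
  apply (Filter_prod _ _ _ (fun u => u = x) (fun b => P (RInt f 0 b - RInt f 0 x))).
  - reflexivity.
  - exact (HL' P HP).
  - intros u b -> Hb. exists (RInt f x b). split.
    + apply RInt_correctR. apply exR_cont. intros; apply Cf.
    + replace (RInt f x b) with (RInt f 0 b - RInt f 0 x); [exact Hb|].
      rewrite <- (chasles f 0 x b); [ring| |]; apply exR_cont; intros; apply Cf.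
Qed.

Lemma deriv_RInt (f : R -> R) x : (forall t, continuous f t) ->
  is_derive (fun b => RInt f 0 b) x (f x).
Proof.
  intros Cf. apply (is_derive_RInt f (fun b => RInt f 0 b) 0 x).
  - apply filter_forall. intros b. apply RInt_correctR. apply exR_cont. intros; apply Cf.
  - apply Cf.
Qed.

Lemma RInt_pointR (f : R -> R) u : RInt f u u = 0.
Proof. exact (RInt_point u f). Qed.

Definition kW : R := Rpower 2 (- (3 / 4)).
Definition s1 a := sqrt (G1 a / G3 a).
Definition s2 a := sqrt (2 * G3 a / G1 a).
Definition dW a x := kW * (s1 a * dy1 a x - s2 a * dy2 a x).

Lemma W_eq a x : W a x = kW * (s1 a * y1 a x - s2 a * y2 a x).
Proof. reflexivity. Qed.

Lemma W_d a x : is_derive (W a) x (dW a x).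
Proof.
  eapply is_derive_ext; [intros t; symmetry; apply W_eq|].
  apply is_derive_scal. apply d_minus; apply is_derive_scal; [apply y1_d| apply y2_d].
Qed.

Lemma dW_d a x : is_derive (dW a) x (- (x ^ 2 / 4 - a) * W a x).
Proof.
  unfold dW. eapply is_derive_eq.
  - apply is_derive_scal. apply d_minus; apply is_derive_scal; [apply dy1_d| apply dy2_d].
  - rewrite W_eq. match goal with |- ?A = ?B => change (@eq R A B) end. ring.
Qed.

Lemma W0 a : W a 0 = kW * s1 a.
Proof.
  rewrite W_eq, y1_eq, y2_eq. replace (0 ^ 2) with 0 by ring. rewrite !PSeries_0.
  unfold Aa, alpha. simpl. field.
Qed.

Lemma dW0 a : dW a 0 = - kW * s2 a.
Proof.
  unfold dW, dy1, dy2. replace (0 ^ 2) with 0 by ring. rewrite !PSeries_0.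
  unfold Bb, beta. simpl. field.
Qed.

Lemma wronsk a : 0 < G1 a -> 0 < G3 a -> W a 0 * dW a 0 = - / 2.
Proof.
  intros H1 H3. rewrite W0, dW0.
  replace (kW * s1 a * (- kW * s2 a)) with (- ((kW * kW) * (s1 a * s2 a))) by ring.
  unfold s1, s2. rewrite <- sqrt_mult_alt.
  2:{ apply Rmult_le_pos; [lra| left; apply Rinv_0_lt_compat; lra]. }
  replace (G1 a / G3 a * (2 * G3 a / G1 a)) with 2 by (field; lra).
  unfold kW. rewrite <- Rpower_plus, <- Rpower_sqrt by lra. rewrite <- Rpower_plus.
  replace (- (3 / 4) + - (3 / 4) + / 2) with (Ropp 1) by field.
  rewrite Rpower_Ropp, Rpower_1 by lra. reflexivity.
Qed.

Lemma Wdeg a : ~ (0 < G1 a /\ 0 < G3 a) -> forall x, W a x = 0.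
Proof.
  intros H x.
  assert (P1 : 0 <= G1 a) by (unfold G1, Gamma_abs; apply sqrt_pos).
  assert (P3 : 0 <= G3 a) by (unfold G3, Gamma_abs; apply sqrt_pos).
  assert (Hs : s1 a = 0 /\ s2 a = 0).
  { unfold s1, s2.
    destruct (Req_dec (G1 a) 0) as [E|E].
    - replace (G1 a / G3 a) with 0 by (rewrite E; unfold Rdiv; ring).
      replace (2 * G3 a / G1 a) with 0 by (rewrite E; unfold Rdiv; rewrite Rinv_0; ring).
      rewrite sqrt_0. auto.
    - assert (E3 : G3 a = 0) by (destruct (Req_dec (G3 a) 0); auto; exfalso; apply H; split; lra).
      replace (G1 a / G3 a) with 0 by (rewrite E3; unfold Rdiv; rewrite Rinv_0; ring).
      replace (2 * G3 a / G1 a) with 0 by (rewrite E3; unfold Rdiv; ring).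
      rewrite sqrt_0. auto. }
  rewrite W_eq. destruct Hs as [-> ->]. ring.
Qed.

Theorem lemma2p2 (a x : R) :
  NW a x = c0p a * W a x + c0m a * W a (- x) - NWhat a x.
Proof.
  destruct (classic (0 < G1 a /\ 0 < G3 a)) as [[H1 H3]|Hd].
  2:{ unfold NW, NWhat. rewrite !(Wdeg a Hd x), !(Wdeg a Hd (- x)). ring. }
  pose proof (wronsk a H1 H3) as HW.
  assert (CW : forall t, continuous (fun t => W a t) t).
  { intros t. eapply cont_of_derive. apply W_d. }
  assert (CWm : forall t, continuous (fun t => W a (- t)) t).
  { intros t. eapply cont_of_derive. eapply d_comp; [apply W_d|].
    apply (is_derive_opp (fun t : R => t) t 1). apply d_id. }
  destruct (conv (fun t => W a t) (dW a) a (W_d a) (dW_d a)) as [Lp HLp].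
  assert (Hm1 : forall t, is_derive (fun t => W a (- t)) t (- dW a (- t))).
  { intros t. eapply is_derive_eq; [eapply d_comp; [apply W_d|]|].
    - apply (is_derive_opp (fun t : R => t) t 1). apply d_id.
    - simpl. unfold opp, one; simpl. ring. }
  assert (Hm2 : forall t, is_derive (fun t => - dW a (- t)) t (- (t ^ 2 / 4 - a) * W a (- t))).
  { intros t. eapply is_derive_eq.
    - apply (is_derive_opp (fun t => dW a (- t))). eapply d_comp; [apply dW_d|].
      apply (is_derive_opp (fun t : R => t) t 1). apply d_id.
    - simpl. unfold opp, one; simpl. match goal with |- ?A = ?B => change (@eq R A B) end. field. }
  destruct (conv (fun t => W a (- t)) (fun t => - dW a (- t)) a Hm1 Hm2) as [Lm HLm].
  pose proof (gen_int _ _ CW HLp) as Gp.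
  pose proof (gen_int _ _ CWm HLm) as Gm.
  assert (Ep : forall x, RInt_gen (fun t => W a t) (at_point x) (Rbar_locally p_infty)
                 = Lp - RInt (fun t => W a t) 0 x).
  { intros y. apply is_RInt_gen_unique. apply Gp. }
  assert (Em : forall x, RInt_gen (fun t => W a (- t)) (at_point x) (Rbar_locally p_infty)
                 = Lm - RInt (fun t => W a (- t)) 0 x).
  { intros y. apply is_RInt_gen_unique. apply Gm. }
  assert (HN : forall y, NWhat a y = W a y * (Lm - RInt (fun t => W a (- t)) 0 y)
                 - W a (- y) * (Lp - RInt (fun t => W a t) 0 y)).
  { intros y. unfold NWhat. rewrite Ep, Em. reflexivity. }
  assert (HD : Derive (NWhat a) 0 = dW a 0 * (Lm + Lp)).
  { rewrite (Derive_ext _ _ 0 HN). apply is_derive_unique.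
    eapply is_derive_eq.
    - apply d_minus.
      + apply d_mul; [apply W_d|]. apply d_minus; [apply is_derive_const| apply deriv_RInt, CWm].
      + apply d_mul; [apply Hm1|]. apply d_minus; [apply is_derive_const| apply deriv_RInt, CW].
    - cbv beta. rewrite !RInt_pointR. replace (- 0) with 0 by ring. unfold zero; simpl. match goal with |- ?A = ?B => change (@eq R A B) end. ring. }
  assert (HDW : Derive (W a) 0 = dW a 0) by (apply is_derive_unique, W_d).
  assert (HN0 : NWhat a 0 = W a 0 * (Lm - Lp)).
  { rewrite HN, !RInt_pointR. replace (- 0) with 0 by ring. ring. }
  assert (Hc0p : c0p a = Lm).
  { unfold c0p. rewrite HD, HDW, HN0.
    replace (- (dW a 0 * (Lm + Lp)) * W a 0 - W a 0 * (Lm - Lp) * dW a 0)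
      with (- 2 * (W a 0 * dW a 0) * Lm) by ring. rewrite HW. field. }
  assert (Hc0m : c0m a = - Lp).
  { unfold c0m. rewrite HD, HDW, HN0.
    replace (dW a 0 * (Lm + Lp) * W a 0 - W a 0 * (Lm - Lp) * dW a 0)
      with (2 * (W a 0 * dW a 0) * Lp) by ring. rewrite HW. field. }
  rewrite Hc0p, Hc0m, HN. unfold NW. ring.
Qed.
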